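(* There is an absolute constant $d$ such that for every finite simple digraph $H$, every positive integer $k$, and every tournament $T$ that does not contain $k$ pairwise arc-disjoint immersion copies of $H$, we have $\mathrm{ctw}(T)\le d\,\|H\|^2k^2$.
   Context: All digraphs are finite and simple; $\|H\|:=|V(H)|+|A(H)|$. A tournament is a simple digraph with exactly one arc between every pair of distinct vertices. An immersion copy of $H$ in $T$ is a subgraph $\widehat H$ of $T$ together with a map sending vertices of $H$ to distinct vertices of $\widehat H$ and arcs $(u,v)$ of $H$ to directed paths from the image of $u$ to the image of $v$, such that every arc of $\widehat H$ lies on exactly one of these paths. For an ordering $\sigma:V(T)\to[|V(T)|]$ (a bijection) and $\alpha\in\{0,\dots,|V(T)|\}$, the $\alpha$-cut is the set of arcs $(u,v)$ with $\sigma(u)>\alpha\ge\sigma(v)$; the width of $\sigma$ is the maximum size of an $\alpha$-cut over all $\alpha$, and the cutwidth $\mathrm{ctw}(T)$ is the minimum width over all orderings. *)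

(* Defs.v *)
From mathcomp Require Import all_boot.
Set Implicit Arguments. Unset Strict Implicit. Unset Printing Implicit Defensive.

(* A finite simple digraph on a finite vertex type V is an irreflexive
   relation E : rel V (arc (u,v) iff E u v); no parallel arcs by construction. *)
Definition simple_digraph (V : finType) (E : rel V) : Prop := irreflexive E.

Definition is_tournament (W : finType) (t : rel W) : Prop :=
  irreflexive t /\ forall u v : W, u != v -> (t u v (+) t v u) = true.

Definition arcset (V : finType) (E : rel V) : {set V * V} :=
  [set a : V * V | E a.1 a.2].

Definition dnorm (V : finType) (E : rel V) : nat := #|V| + #|arcset E|.

Definition path_arcs (W : Type) (x : W) (p : seq W) : seq (W * W) :=
  zip (x :: p) p.

Definition dipath (W : finType) (t : rel W) (x y : W) (p : seq W) : Prop :=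
  path t x p /\ last x p = y /\ uniq (x :: p).

Definition imm_arcs (V W : finType) (E : rel V) (phi : V -> W)
    (P : V -> V -> seq W) : seq (W * W) :=
  flatten [seq path_arcs (phi a.1) (P a.1 a.2) | a <- enum (arcset E)].

(* (phi, P) is an immersion copy of H=(V,E) in T=(W,t): phi injective on
   vertices, each arc (u,v) mapped to a directed path from phi u to phi v,
   and every arc of the copy (the union of these paths) lies on exactly one
   of the paths (i.e. the combined arc list is duplicate-free). *)
Definition is_immersion (V W : finType) (E : rel V) (t : rel W)
    (phi : V -> W) (P : V -> V -> seq W) : Prop :=
  injective phi /\
  (forall u v, E u v -> dipath t (phi u) (phi v) (P u v)) /\
  uniq (imm_arcs E phi P).

Definition has_disjoint_immersions (V W : finType) (E : rel V) (t : rel W)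
    (k : nat) : Prop :=
  exists (phi : 'I_k -> V -> W) (P : 'I_k -> V -> V -> seq W),
    (forall i, is_immersion E t (phi i) (P i)) /\
    (forall i j, i != j -> forall e,
        e \in imm_arcs E (phi i) (P i) -> e \notin imm_arcs E (phi j) (P j)).

(* Orderings sigma : V(T) -> [|V(T)|], encoded 0-based: sigma x : 'I_#|W|
   stands for the position (sigma x).+1.  The alpha-cut, alpha in 0..|W|:
   arcs (u,v) with sigma(u) > alpha >= sigma(v) (1-based positions). *)
Definition cut (W : finType) (t : rel W) (sigma : W -> 'I_#|W|) (alpha : nat)
  : nat :=
  #|[set a : W * W | [&& t a.1 a.2, alpha < (sigma a.1).+1
                                   & (sigma a.2).+1 <= alpha]]|.

Definition width (W : finType) (t : rel W) (sigma : W -> 'I_#|W|) : nat :=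
  \max_(alpha < #|W|.+1) cut t sigma alpha.

(* Cutwidth: minimum width over all bijective orderings.  The default value
   #|W| * #|W| bounds every width, so this is the true minimum (orderings
   always exist). *)
Definition ctw (W : finType) (t : rel W) : nat :=
  \big[minn/#|W| * #|W|]_(s : {ffun W -> 'I_#|W|} | injectiveb s) width t s.

(* Main.v *)
Require Import Defs.
From mathcomp Require Import all_boot zify.
Set Implicit Arguments. Unset Strict Implicit. Unset Printing Implicit Defensive.

Section Tour.
Variables (W : finType) (t : rel W).
Hypothesis tirr : irreflexive t.
Hypothesis ttot : forall u v : W, u != v -> (t u v (+) t v u) = true.

Lemma tour_or u v : u != v -> t u v || t v u.
Proof. by move=> /ttot; case: (t u v); case: (t v u). Qed.

Lemma tour_asym u v : t u v -> t v u = false.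
Proof.
move=> h; have uv : u != v by apply: contraTneq h => ->; rewrite tirr.
by move: (ttot uv); rewrite h; case: (t v u).
Qed.

Lemma tour_xor u v : u != v -> (t u v : nat) + t v u = 1.
Proof. by move=> /ttot; case: (t u v); case: (t v u). Qed.

Definition dg x := #|[set y | t x y]|.

Lemma dg_lt x : dg x < #|W|.
Proof.
rewrite /dg; apply: (@leq_ltn_trans #|[set~ x]|).
  by apply: subset_leq_card; apply/subsetP => y; rewrite !inE; apply: contraTneq => ->; rewrite tirr.
by rewrite cardsC1 prednK // (cardD1 x).
Qed.

Lemma dgE x : dg x = \sum_b (t x b : nat).
Proof. by rewrite /dg -sum1_card big_mkcond /=; apply: eq_bigr => b _; rewrite inE; case: (t x b). Qed.

Lemma card_pairs (P : W -> W -> bool) :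
  #|[set a : W * W | P a.1 a.2]| = \sum_a \sum_b (P a b : nat).
Proof.
rewrite -sum1_card big_mkcond /= pair_big /=.
by apply: eq_bigr => -[a b] _; rewrite inE /=; case: (P a b).
Qed.

Definition outs (Z : {set W}) :=
  #|[set a : W * W | [&& t a.1 a.2, a.1 \in Z & a.2 \notin Z]]|.

Lemma inner_sum (Z : {set W}) :
  2 * (\sum_a \sum_b ([&& t a b, a \in Z & b \in Z] : nat)) = #|Z| * (#|Z| - 1).
Proof.
rewrite mul2n -addnn.
have EE : \sum_a \sum_b ([&& t a b, a \in Z & b \in Z] : nat) =
          \sum_a \sum_b ([&& t b a, a \in Z & b \in Z] : nat).
  rewrite exchange_big /=; apply: eq_bigr => a _; apply: eq_bigr => b _.
  by case: (a \in Z); case: (b \in Z); rewrite ?andbF ?andbT.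
rewrite {2}EE -big_split /=.
rewrite (eq_bigr (fun a => (a \in Z : nat) * (#|Z| - 1))); last first.
  move=> a _; rewrite -big_split /=.
  case aZ: (a \in Z) => /=; last by rewrite big1 // => b _; rewrite !andbF.
  rewrite mul1n (bigD1 a) //= !tirr /= add0n.
  rewrite (eq_bigr (fun b => (b \in Z : nat))); last first.
    move=> b ba; case bZ: (b \in Z); rewrite ?andbF ?andbT /=; last by case: (t a b); case: (t b a).
    by rewrite tour_xor // eq_sym.
  rewrite -big_mkcondr /= sum1_card.
  rewrite (cardsD1 a Z) aZ /= add1n subn1 /=.
  rewrite add0n; try rewrite (cardsD1 a Z) aZ add1n subn1 /=.
  by apply: eq_card => b; rewrite !inE.
rewrite (eq_bigr (fun i => if i \in Z then #|Z| - 1 else 0)); last by move=> i _; case: (i \in Z); rewrite ?mul1n ?mul0n.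
by rewrite -big_mkcond sum_nat_const.
Qed.

Lemma out_sum (Z : {set W}) :
  2 * outs Z + #|Z| * (#|Z| - 1) = 2 * \sum_(a in Z) dg a.
Proof.
rewrite -inner_sum -mulnDr; congr (2 * _).
rewrite /outs (card_pairs (fun a b => [&& t a b, a \in Z & b \notin Z])).
rewrite -big_split [RHS]big_mkcond /=; apply: eq_bigr => a _.
rewrite -big_split /=; case aZ: (a \in Z) => /=; last first.
  by rewrite big1 // => b _; rewrite !andbF.
rewrite dgE; apply: eq_bigr => b _; case: (t a b); case: (b \in Z) => //.
Qed.


Definition key x := dg x * #|W| + enum_rank x.
Definition rk x := #|[set y | key y < key x]|.

Lemma key_inj : injective key.
Proof.
move=> x y; rewrite /key => h.
have n0 : 0 < #|W| by apply/card_gt0P; exists x.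
have ex : enum_rank x < #|W| := ltn_ord _.
have ey : enum_rank y < #|W| := ltn_ord _.
have : enum_rank x = enum_rank y :> nat.
  by have := congr1 (fun m => m %% #|W|) h; rewrite /= !modnMDl !modn_small.
by move/val_inj/enum_rank_inj.
Qed.

Lemma rk_lt x : rk x < #|W|.
Proof.
rewrite /rk; apply: (@leq_ltn_trans #|[set~ x]|).
  by apply: subset_leq_card; apply/subsetP => y; rewrite !inE; apply: contraTneq => ->; rewrite ltnn.
by rewrite cardsC1 prednK // (cardD1 x).
Qed.

Lemma rk_key x y : key x < key y -> rk x < rk y.
Proof.
move=> h; rewrite /rk; apply: proper_card; apply/properP; split.
  by apply/subsetP => z; rewrite !inE => /ltn_trans; apply.
by exists x; rewrite !inE ?ltnn.
Qed.

Lemma rk_inj : injective rk.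
Proof.
move=> x y h; apply: key_inj; case: (ltngtP (key x) (key y)) => // /rk_key; by rewrite h ltnn.
Qed.

Lemma rk_dg x y : rk x < rk y -> dg x <= dg y.
Proof.
move=> h; have : key x < key y.
  case: (ltngtP (key x) (key y)) => // [/rk_key hyx|/key_inj e].
    by move: (ltn_trans h hyx); rewrite ltnn.
  by move: h; rewrite e ltnn.
rewrite /key; have ey : enum_rank y < #|W| := ltn_ord _.
move=> kk; rewrite leqNgt; apply/negP => lt; nia.
Qed.

Lemma rk_le_dg x y : rk x <= rk y -> dg x <= dg y.
Proof.
rewrite leq_eqVlt => /orP[/eqP/rk_inj -> //|]; exact: rk_dg.
Qed.

Lemma rk_onto j : j < #|W| -> exists x, rk x = j.
Proof.
move=> jn.
pose f := fun x => Ordinal (rk_lt x).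
have finj : injective f by move=> x y /(congr1 val) /= /rk_inj.
have := @inj_card_onto _ _ f finj; rewrite card_ord => /(_ (leqnn _) (Ordinal jn)).
by case/codomP => x /(congr1 val) /= ->; exists x.
Qed.

Definition Bot j := [set x | rk x < j].

Definition dl j := \sum_(x | rk x == j) dg x.

Lemma dlE x : dl (rk x) = dg x.
Proof.
rewrite /dl (big_pred1 x) // => y; apply/eqP/eqP => [/rk_inj|->] //.
Qed.

Lemma BotS x : Bot (rk x).+1 = x |: Bot (rk x).
Proof.
apply/setP => y; rewrite !inE ltnS leq_eqVlt; congr (_ || _).
by apply/eqP/eqP => [/rk_inj|->].
Qed.

Lemma Bot_props j : j <= #|W| ->
  #|Bot j| = j /\ \sum_(x in Bot j) dg x = \sum_(u < j) dl u.
Proof.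
elim: j => [_|j IH jn].
  rewrite big_ord0; have -> : Bot 0 = set0 by apply/setP => x; rewrite !inE.
  by rewrite cards0 big_set0.
have [x rx] := rk_onto jn; have [c s] := IH (ltnW jn).
rewrite -rx BotS cardsU1 big_setU1 /=; last by rewrite inE ltnn.
all: try by rewrite inE ltnn.
have xn : x \notin Bot (rk x) by rewrite inE ltnn.
rewrite xn rx c s big_ord_recr /= -rx dlE; split; [lia | by rewrite addnC].
Qed.

Lemma dl_mono i j : i <= j -> j < #|W| -> dl i <= dl j.
Proof.
move=> ij jn; have [x rx] := rk_onto (leq_ltn_trans ij jn); have [y ry] := rk_onto jn.
by rewrite -rx -ry !dlE; apply: rk_le_dg; rewrite rx ry.
Qed.

Lemma dl_lt j : j < #|W| -> dl j < #|W|.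
Proof. by move=> jn; have [x <-] := rk_onto jn; rewrite dlE dg_lt. Qed.

Definition f j := outs (Bot j).

Lemma fE j : j <= #|W| -> 2 * f j + j * (j - 1) = 2 * \sum_(u < j) dl u.
Proof.
move=> jn; have [c s] := Bot_props jn; rewrite -s -{2 3}c; exact: out_sum.
Qed.


Lemma card_Bot j : j <= #|W| -> #|Bot j| = j.
Proof. by move/Bot_props => []. Qed.

Lemma sum_Bot_min (Z : {set W}) :
  \sum_(x in Bot #|Z|) dg x <= \sum_(x in Z) dg x.
Proof.
have jn : #|Z| <= #|W| by apply: max_card.
case ej: #|Z| jn => [|j] jn.
  have -> : Bot 0 = set0 by apply/setP => x; rewrite !inE.
  by rewrite big_set0.
have [v rv] := rk_onto jn.
set B := Bot j.+1.
have hB b : b \in B -> dg b <= dg v.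
  by rewrite /B inE ltnS -rv => /rk_le_dg.
have hA a : a \notin B -> dg v <= dg a.
  by rewrite /B inE -leqNgt -rv => /rk_dg.
rewrite (big_setID Z) [X in _ <= X](big_setID B) /= setIC leq_add2l.
apply: (@leq_trans (#|B :\: Z| * dg v)).
  rewrite -sum_nat_const; apply: leq_sum => b; rewrite inE => /andP[_]; exact: hB.
have -> : #|B :\: Z| = #|Z :\: B|.
  by rewrite !cardsD [Z :&: B]setIC card_Bot // ej.
rewrite -sum_nat_const; apply: leq_sum => a; rewrite inE => /andP[aB _]; exact: hA.
Qed.

Lemma outs_min (Z : {set W}) : f #|Z| <= outs Z.
Proof.
have jn : #|Z| <= #|W| by apply: max_card.
have h1 := out_sum (Bot #|Z|); have h2 := out_sum Z.
rewrite card_Bot // in h1; have h3 := sum_Bot_min Z.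
rewrite /f; lia.
Qed.

Lemma f_le_card j : j <= #|W| -> 2 * f j + j * (j - 1) = 2 * \sum_(u < j) dl u.
Proof. exact: fE. Qed.


Lemma sum_shift i q : \sum_(u < i + q) dl u = \sum_(u < i) dl u + \sum_(u < q) dl (i + u).
Proof.
elim: q => [|q IH]; first by rewrite addn0 big_ord0 addn0.
by rewrite addnS !big_ord_recr /= IH addnA.
Qed.

Lemma fR i q : i + q <= #|W| ->
  2 * f (i + q) + 2 * q * i + q * (q - 1) = 2 * f i + 2 * \sum_(u < q) dl (i + u).
Proof.
move=> h; have h1 := fE h; have h2 := fE (leq_trans (leq_addr q i) h).
rewrite sum_shift in h1.
move: h1 h2; case: q h => [|q] h; case: i h => [|i] h; rewrite ?big_ord0 ?addn0; nia.
Qed.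

Lemma sum_lo i q : i + q <= #|W| -> q * dl i <= \sum_(u < q) dl (i + u).
Proof.
move=> h; rewrite -[q in q * _]card_ord -sum_nat_const; apply: leq_sum => u _.
apply: dl_mono; first exact: leq_addr.
by apply: (leq_trans _ h); rewrite ltn_add2l.
Qed.

Lemma sum_hi i q c : i + q <= #|W| -> (forall u, u < q -> dl (i + u) <= c) ->
  \sum_(u < q) dl (i + u) <= q * c.
Proof.
move=> h hc; rewrite -[q in q * _]card_ord -sum_nat_const; apply: leq_sum => u _.
exact: hc.
Qed.

Section Window.
Variable J : nat.
Hypothesis Jn : J < #|W|.
Hypothesis fmax : forall j, j <= #|W| -> f j <= f J.

Lemma dlJ_le : dl J <= J.
Proof.
have := @fR J 1; rewrite addn1 => /(_ Jn); rewrite big_ord1 /= addn0 => h.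
have := fmax Jn; lia.
Qed.

Lemma dlJ_ge : J <= (dl J).+1.
Proof.
case: J Jn fmax => [//|J'] Jn' fmax'.
have h := fR (i := J') (q := 1); rewrite addn1 in h; have {}h := h (ltnW Jn').
rewrite big_ord1 /= addn0 in h.
have := fmax' J' (ltnW (ltnW Jn')); have := dl_mono (leqnSn J') Jn'; lia.
Qed.

Lemma winR q : J + q <= #|W| -> 2 * f J <= 2 * f (J + q) + q * (q + 1).
Proof.
move=> h; have h1 := fR h; have h2 := sum_lo h; have h3 := dlJ_ge.
nia.
Qed.

Lemma winL q : q <= J -> 2 * f J <= 2 * f (J - q) + q * (q + 1).
Proof.
move=> tJ; have e : J - q + q = J by rewrite subnK.
have h : J - q + q <= #|W| by rewrite e ltnW.
have h1 := fR h; rewrite e in h1.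
have h2 : \sum_(u < q) dl (J - q + u) <= q * J.
  apply: sum_hi => // u ut; apply: leq_trans dlJ_le; apply: dl_mono => //.
  by rewrite -{2}e leq_add2l ltnW.
nia.
Qed.

Lemma dl_upper j : J <= j -> j < #|W| -> dl j <= j + (j - J).
Proof.
move=> Jj jn; rewrite leqNgt; apply/negP => hlt.
set u := dl j - j.
have ju : j + u = dl j by rewrite /u subnKC //; lia.
have hu : j - J < u by rewrite /u ltn_subRL.
have hn : j + u <= #|W| by rewrite ju ltnW // dl_lt.
have h1 := fR hn; have h2 := sum_lo hn.
have h3 := fmax hn.
have h4 := winR (q := j - J); rewrite subnKC // in h4; have {}h4 := h4 (ltnW jn).
have h5 : (j - J + 1) * (j - J + 2) <= u * (u + 1).
  by apply: leq_mul; rewrite ?addn1 ?addn2 // ltnS.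
nia.
Qed.

Lemma dl_lower j : J <= j -> j < #|W| -> J <= (dl j).+1.
Proof.
move=> Jj jn; apply: (leq_trans dlJ_ge); rewrite ltnS; exact: dl_mono.
Qed.

End Window.


Definition eU (U : seq (W * W)) : rel W := fun a b => t a b && ((a, b) \notin U).
Definition ain (U : seq (W * W)) x := count (fun a : W * W => a.2 == x) U.
Definition aout (U : seq (W * W)) y := count (fun a : W * W => a.1 == y) U.

Lemma card_in_arcs U x : #|[set z | (z, x) \in U]| <= ain U x.
Proof.
apply: (@leq_trans #|[seq a.1 | a <- U & a.2 == x]|); last first.
  by apply: leq_trans (card_size _) _; rewrite size_map size_filter.
apply: subset_leq_card; apply/subsetP => z; rewrite inE => zU.
by apply/mapP; exists (z, x); rewrite // mem_filter /= eqxx.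
Qed.

Lemma card_out_arcs U y : #|[set z | (y, z) \in U]| <= aout U y.
Proof.
apply: (@leq_trans #|[seq a.2 | a <- U & a.1 == y]|); last first.
  by apply: leq_trans (card_size _) _; rewrite size_map size_filter.
apply: subset_leq_card; apply/subsetP => z; rewrite inE => zU.
by apply/mapP; exists (y, z); rewrite // mem_filter /= eqxx.
Qed.

Lemma reach_fail U y x : ~~ connect (eU U) y x ->
  exists j, [/\ j <= #|W|, f j <= size U, j <= dg x + ain U x & dg y < j + aout U y].
Proof.
move=> nc; set R := [set z | connect (eU U) y z].
have yR : y \in R by rewrite inE connect0.
have xR : x \notin R by rewrite inE.
exists #|R|; split; first exact: max_card.
- apply: leq_trans (outs_min R) _; rewrite /outs.
  apply: leq_trans (card_size U); apply: subset_leq_card; apply/subsetP => -[a b].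
  rewrite !inE /= => /and3P[tab aR bR]; apply: contraNT bR => nab.
  apply: (connect_trans aR); apply: connect1; by rewrite /eU tab.
- apply: leq_trans (leq_add (leqnn _) (card_in_arcs U x)).
  apply: leq_trans (leq_card_setU _ _); apply: subset_leq_card; apply/subsetP => z zR.
  rewrite !inE; have zx : z != x by apply: contraTneq zR => ->.
  case/orP: (tour_or zx) => [tzx|->//]; apply/orP; right.
  apply: contraNT xR => nzx; rewrite inE; move: zR; rewrite inE => zR.
  apply: (connect_trans zR); apply: connect1; by rewrite /eU tzx.
- have h : dg y <= #|R :\ y| + aout U y.
    apply: leq_trans (leq_add (leqnn _) (card_out_arcs U y)).
    apply: leq_trans (leq_card_setU _ _); apply: subset_leq_card; apply/subsetP => z.
    rewrite !inE => tyz; case yzU: ((y, z) \in U); rewrite ?orbT // orbF.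
    apply/andP; split; first by apply: contraTneq tyz => ->; rewrite tirr.
    by apply: connect1; rewrite /eU tyz yzU.
  move: h; rewrite (cardsD1 y R) yR; lia.
Qed.


Lemma min_path (e : rel W) y x : connect e y x ->
  exists p, [/\ path e y p, last y p = x, uniq (y :: p) &
    forall q, path e y q -> last y q = x -> size p <= size q].
Proof.
move=> /connectP[p0 pth0 lst0].
pose P m := [exists p : m.-tuple W, path e y p && (last y p == x)].
have exP : exists m, P m.
  by exists (size p0); apply/existsP; exists (in_tuple p0); rewrite pth0 -lst0 eqxx.
case: (ex_minnP exP) => m /existsP[p /andP[pth /eqP lst]] minm.
have hmin q : path e y q -> last y q = x -> m <= size q.
  move=> pq lq; apply: minm; apply/existsP; exists (in_tuple q); by rewrite pq lq eqxx.
move: lst; case: (shortenP pth) => p' pth' uq sub lst.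
exists p'; split=> // q pq lq; apply: leq_trans (hmin q pq lq).
rewrite -(size_tuple p); apply: uniq_leq_size => //.
by case/andP: uq.
Qed.

Lemma short_path U y x : y != x -> connect (eU U) y x ->
  exists p, [/\ path (eU U) y p, last y p = x, uniq (y :: p) &
     size p <= (dg x + ain U x + aout U y - dg y) + 2].
Proof.
move=> yx /(min_path) [p [pth lst uq hmin]].
exists p; split=> //.
set d := size p.
case: (leqP d 2) => [d2|d3]; first by apply: leq_trans d2 _; apply: leq_addl.
have nyx : ~~ eU U y x.
  apply/negP => h; have := hmin [:: x]; rewrite /= h => /(_ isT erefl).
  by rewrite -/d; lia.
have hA1 z : eU U y z -> ~~ eU U z x /\ z != x.
  move=> yz; split.
    apply/negP => h; have := hmin [:: z; x]; rewrite /= h yz => /(_ isT erefl).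
    by rewrite -/d; lia.
  apply/negP => /eqP zx; move: yz; rewrite zx => h.
  by move: nyx; rewrite h.
have sp : size (take (d - 2) p) = d - 2 by rewrite size_take; case: ltnP => //; lia.
case ht: (take (d - 2) p) sp => [|p1 L] sp; first by move: sp => /=; lia.
set D := drop (d - 2) p.
have pE : p = p1 :: L ++ D by rewrite -cat_cons -ht cat_take_drop.
have sL : size L = d - 3 by move: sp => /= sp; lia.
have sD : size D = 2 by rewrite size_drop -/d; lia.
have uL : uniq L.
  move: uq; rewrite pE /= cat_uniq.
  by case/andP=> _ /andP[_ /and3P[]].
have hL z : z \in L -> [/\ ~~ eU U y z, ~~ eU U z x, z != x & z != y].
  move=> zL; case/splitPr: zL pE sL => L1 L2 pE0 sL.
  have pE : p = (p1 :: L1) ++ z :: (L2 ++ D) by rewrite pE0 -catA.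
  have sz : size p = size L1 + size L2 + 4 by rewrite pE !size_cat /= size_cat sD; lia.
  have pth2 := pth; rewrite pE cat_path /= in pth2.
  case/and3P: pth2 => pth1 e1 pth2.
  have lst2 : last z (L2 ++ D) = x by move: lst; rewrite pE last_cat.
  have uq2 := uq; rewrite pE in uq2.
  have zD : z \notin L2 ++ D.
    move: uq2; rewrite -cat_cons cat_uniq => /and3P[_ _]; by rewrite /= => /andP[].
  have zy : z != y.
    move: uq; rewrite pE /= => /andP[+ _]; apply: contraNneq => <-.
    by rewrite inE mem_cat inE eqxx !orbT.
  have zx : z != x.
    apply: contraNneq zD => ->; rewrite -lst2.
    case: (L2 ++ D) (size_cat L2 D) => [|a r]; first by rewrite sD addn2.
    by move=> _; rewrite /= mem_last.
  split=> //.
  - apply/negP => yz; have := hmin (z :: L2 ++ D).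
    rewrite /= yz pth2 lst2 => /(_ isT erefl).
    move=> h; rewrite size_cat sD sz in h.
    set s2 := size L2 in h; set s1 := size L1 in h; clear -h; lia.
  - apply/negP => zx'; have := hmin ((p1 :: L1) ++ [:: z; x]).
    rewrite cat_path last_cat /= pth1 e1 zx' => /(_ isT erefl).
    rewrite size_cat /= sz => h.
    set s2 := size L2 in h; set s1 := size L1 in h; clear -h; lia.
set A1 := [set z | eU U y z].
set LS := [set z | z \in L].
have cLS : #|LS| = d - 3 by rewrite cardsE; move/card_uniqP: uL ->.
have dAL : A1 :&: LS = set0.
  apply/setP => z; rewrite !inE; apply/negP => /andP[h zL].
  by case: (hL z zL) => /negP.
have yAL : y \notin A1 :|: LS.
  rewrite !inE negb_or; apply/andP; split; first by rewrite /eU tirr.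
  apply/negP => yL; by case: (hL y yL) => _ _ _; rewrite eqxx.
have c1 : #|y |: (A1 :|: LS)| = 1 + #|A1| + (d - 3).
  by rewrite cardsU1 yAL cardsU dAL cards0 subn0 cLS addnA.
have c2 : #|y |: (A1 :|: LS)| <= dg x + ain U x.
  apply: leq_trans (leq_add (leqnn _) (card_in_arcs U x)).
  apply: leq_trans (leq_card_setU _ _); apply: subset_leq_card; apply/subsetP => z.
  have key z' : z' != x -> ~~ eU U z' x -> (z' \in [set z0 | t x z0] :|: [set z0 | (z0, x) \in U]).
    move=> z'x nz; rewrite !inE; case/orP: (tour_or z'x) => [tzx|->//].
    by apply/orP; right; move: nz; rewrite /eU tzx /= negbK.
  rewrite !inE => /orP[/eqP->|/orP[h|zL]].
  - by move: (key y yx nyx); rewrite !inE.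
  - by case: (hA1 z h) => nz zx; move: (key z zx nz); rewrite !inE.
  - by case: (hL z zL) => _ nz zx _; move: (key z zx nz); rewrite !inE.
have c3 : dg y <= #|A1| + aout U y.
  apply: leq_trans (leq_add (leqnn _) (card_out_arcs U y)).
  apply: leq_trans (leq_card_setU _ _); apply: subset_leq_card; apply/subsetP => z.
  rewrite !inE => tyz; case yzU: ((y, z) \in U); rewrite ?orbT // orbF.
  by rewrite /eU tyz yzU.
lia.
Qed.


Lemma snd_arcs (x : W) p : map snd (path_arcs x p) = p.
Proof. by elim: p x => [|y p IH] x //=; rewrite IH. Qed.

Lemma fst_arcs (x : W) p : map fst (path_arcs x p) = belast x p.
Proof. by elim: p x => [|y p IH] x //=; rewrite IH. Qed.

Lemma size_arcs (x : W) p : size (path_arcs x p) = size p.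
Proof. by rewrite -(size_map snd) snd_arcs. Qed.

Lemma arcs_uniq (x : W) p : uniq (x :: p) -> uniq (path_arcs x p).
Proof. by case/andP=> _ up; apply: (@map_uniq _ _ snd); rewrite snd_arcs. Qed.

Lemma arcs_rel (e : rel W) x p : path e x p -> forall a, a \in path_arcs x p -> e a.1 a.2.
Proof.
elim: p x => [|y p IH] x //= /andP[exy pp] a; rewrite inE => /orP[/eqP->//|].
exact: IH.
Qed.

Lemma count_in_le (x : W) p z : uniq (x :: p) ->
  count (fun a : W * W => a.2 == z) (path_arcs x p) <= 1.
Proof.
case/andP=> _ up.
have -> : count (fun a : W * W => a.2 == z) (path_arcs x p) = count (pred1 z) (map snd (path_arcs x p)).
  by rewrite count_map.
by rewrite snd_arcs count_uniq_mem // leq_b1.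
Qed.

Lemma count_out_le (x : W) p z : uniq (x :: p) ->
  count (fun a : W * W => a.1 == z) (path_arcs x p) <= 1.
Proof.
move=> up.
have -> : count (fun a : W * W => a.1 == z) (path_arcs x p) = count (pred1 z) (map fst (path_arcs x p)).
  by rewrite count_map.
rewrite fst_arcs count_uniq_mem ?leq_b1 //.
by move: up; rewrite lastI rcons_uniq => /andP[].
Qed.

Lemma sumn_map_le (I : eqType) (F : I -> nat) c (l : seq I) :
  (forall i, i \in l -> F i <= c) -> sumn (map F l) <= c * size l.
Proof.
elim: l => [|i l IH] h //=; rewrite mulnS; apply: leq_add.
  by apply: h; rewrite inE eqxx.
by apply: IH => j jl; apply: h; rewrite inE jl orbT.
Qed.

Section Route.
Variables (Ix : eqType) (src dst : Ix -> W) (Pr : pred Ix) (P Lmax : nat).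
Hypothesis Hfeas : forall U i, Pr i -> size U <= Lmax * P ->
  (forall z, ain U z <= P) -> (forall z, aout U z <= P) -> connect (eU U) (src i) (dst i).
Hypothesis Hlen : forall i, Pr i -> dg (dst i) + P + P - dg (src i) + 2 <= Lmax.
Hypothesis Hne : forall i, Pr i -> src i != dst i.

Lemma route (l : seq Ix) : uniq l -> all Pr l -> size l <= P ->
  exists Pth : Ix -> seq W,
   [/\ (forall i, i \in l -> dipath t (src i) (dst i) (Pth i)),
       (forall i, i \in l -> size (Pth i) <= Lmax) &
       uniq (flatten [seq path_arcs (src i) (Pth i) | i <- l])].
Proof.
elim: l => [|i0 l IH] /=.
  by move=> _ _ _; exists (fun _ => [::]).
case/andP=> i0l ul /andP[Pi0 Pl] sl.
have [Pth [hdp hsz hu]] := IH ul Pl (ltnW sl).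
set U := flatten [seq path_arcs (src i) (Pth i) | i <- l].
have hdp' i : i \in l -> uniq (src i :: Pth i) by move=> /hdp [_ []].
have szU : size U <= Lmax * P.
  rewrite size_flatten /shape -map_comp; apply: leq_trans (sumn_map_le (c := Lmax) _) _.
    by move=> i il /=; rewrite size_arcs; apply: hsz.
  by rewrite leq_mul2l ltnW ?orbT.
have inU z : ain U z <= P.
  rewrite /ain count_flatten -map_comp; apply: leq_trans (sumn_map_le (c := 1) _) _.
    by move=> i il /=; apply: count_in_le; apply: hdp'.
  by rewrite mul1n ltnW.
have outU z : aout U z <= P.
  rewrite /aout count_flatten -map_comp; apply: leq_trans (sumn_map_le (c := 1) _) _.
    by move=> i il /=; apply: count_out_le; apply: hdp'.
  by rewrite mul1n ltnW.
have con := Hfeas Pi0 szU inU outU.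
have [p [pth lst uq szp]] := short_path (Hne Pi0) con.
exists (fun i => if i == i0 then p else Pth i); split.
- move=> i; rewrite inE => /orP[/eqP->|il]; rewrite ?eqxx.
    split; last by split.
    by apply: sub_path pth => a b /andP[].
  have -> : (i == i0) = false by apply/eqP => e; move: i0l; rewrite -e il.
  exact: hdp.
- move=> i; rewrite inE => /orP[/eqP->|il]; rewrite ?eqxx.
    apply: leq_trans szp _; apply: leq_trans (Hlen Pi0).
    rewrite leq_add2r leq_sub2r // -!addnA leq_add2l; apply: leq_add => //.
  have -> : (i == i0) = false by apply/eqP => e; move: i0l; rewrite -e il.
  exact: hsz.
- rewrite /= eqxx cat_uniq arcs_uniq //=.
  have -> : [seq path_arcs (src i) (if i == i0 then p else Pth i) | i <- l] =
            [seq path_arcs (src i) (Pth i) | i <- l].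
    apply/eq_in_map => i il; have -> // : (i == i0) = false.
    by apply/eqP => e; move: i0l; rewrite -e il.
  rewrite -/U hu andbT; apply/hasPn => a aU; apply/negP => ap.
  have := arcs_rel pth ap; rewrite /eU => /andP[_]; by case: a aU ap => ? ? /= ->.
Qed.

End Route.

End Tour.


Lemma bigmin_le_seq (I : eqType) (r : seq I) (P : pred I) (F : I -> nat) d x :
  x \in r -> P x -> \big[minn/d]_(i <- r | P i) F i <= F x.
Proof.
elim: r => // y r IH; rewrite inE big_cons => /orP[/eqP<- |xr] Px.
  by rewrite Px geq_minl.
case: (P y); last exact: IH.
exact: leq_trans (geq_minr _ _) (IH xr Px).
Qed.

Lemma flat_uniq_pair (I T : eqType) (F : I -> seq T) (l : seq I) :
  uniq l -> uniq (flatten (map F l)) ->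
  (forall i, i \in l -> uniq (F i)) /\
  (forall i j x, i \in l -> j \in l -> i != j -> x \in F i -> x \notin F j).
Proof.
elim: l => [|i0 l IH] /=; first by split.
case/andP=> i0l ul; rewrite cat_uniq => /and3P[u0 hd ur].
have [IH1 IH2] := IH ul ur.
have disj x j : j \in l -> x \in F i0 -> x \notin F j.
  move=> jl x0; apply/negP => xj.
  have xf : x \in flatten (map F l) by apply/flattenP; exists (F j) => //; apply/mapP; exists j.
  by move/hasPn: hd => /(_ x xf); rewrite x0.
split.
  by move=> i; rewrite inE => /orP[/eqP->|]; [|apply: IH1].
move=> i j x; rewrite !inE => /orP[/eqP->|il] /orP[/eqP->|jl] ij; rewrite ?eqxx // in ij.
- by apply: disj.
- move=> xi; apply/negP => x0; by move: (disj x i il x0); rewrite xi.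
- exact: IH2.
Qed.

Lemma flat_uniq_of (I T : eqType) (F : I -> seq T) (l : seq I) :
  uniq l -> (forall i, i \in l -> uniq (F i)) ->
  (forall i j x, i \in l -> j \in l -> i != j -> x \in F i -> x \notin F j) ->
  uniq (flatten (map F l)).
Proof.
elim: l => [|i0 l IH] //=; case/andP=> i0l ul h1 h2.
rewrite cat_uniq h1 ?inE ?eqxx //= IH //; last first.
- by move=> i j x il jl; apply: h2; rewrite inE ?il ?jl orbT.
- by move=> i il; apply: h1; rewrite inE il orbT.
rewrite andbT; apply/hasPn => x /flattenP[s /mapP[j jl ->] xj]; apply/negP => x0.
have := h2 i0 j x; rewrite !inE eqxx jl orbT /= => /(_ isT isT).
have -> : i0 != j by apply: contraNneq i0l => ->.
by move=> /(_ isT x0); rewrite xj.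
Qed.

Lemma arith_contra M D fj X : 64 * D ^ 2 < M -> 2 * M <= 2 * fj + X ->
  fj <= (4 * D + 3) * D -> X <= (3 * D) * (3 * D + 1) -> False.
Proof.
move=> h1 h2 h3 h4.
have hD : D <= D * D by case: D {h1 h2 h3 h4} => // D; rewrite mulSn leq_addr.
rewrite expnS expn1 in h1.
lia.
Qed.

Section Main.
Variables (W : finType) (t : rel W).
Hypothesis tirr : irreflexive t.
Hypothesis ttot : forall u v : W, u != v -> (t u v (+) t v u) = true.

Lemma f_n0 : f t #|W| = 0.
Proof.
rewrite /f /outs; apply/eqP; rewrite cards_eq0; apply/eqP/setP => -[a b]; rewrite !inE /=.
by rewrite !rk_lt /= andbF.
Qed.

Lemma sig_lt x : #|W| - 1 - rk t x < #|W|.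
Proof. have := rk_lt t x; lia. Qed.

Definition sig : {ffun W -> 'I_#|W|} := [ffun x => Ordinal (sig_lt x)].

Lemma sig_inj : injectiveb sig.
Proof.
apply/injectiveP => x y; rewrite !ffunE => /(congr1 val) /= h; apply: (@rk_inj _ t).
move: (rk_lt t x) (rk_lt t y) h; set n := #|W|; lia.
Qed.

Lemma cutE a : a <= #|W| -> cut t sig a = f t (#|W| - a).
Proof.
move=> an; rewrite /cut /f /outs; apply: eq_card => -[u v]; rewrite !inE /= !ffunE /=.
have hu := rk_lt t u; have hv := rk_lt t v.
have e1 : (a < (#|W| - 1 - rk t u).+1) = (rk t u < #|W| - a) by apply/idP/idP; lia.
have e2 : ((#|W| - 1 - rk t v).+1 <= a) = ~~ (rk t v < #|W| - a) by apply/idP/idP; lia.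
by rewrite e1 e2.
Qed.

Lemma ctw_le_M J : (forall j, j <= #|W| -> f t j <= f t J) -> ctw t <= f t J.
Proof.
move=> fmax; rewrite /ctw.
apply: (@leq_trans (width t sig)).
  by apply: bigmin_le_seq; [exact: mem_index_enum | exact: sig_inj].
apply/bigmax_leqP => a _; rewrite cutE; last by rewrite -ltnS.
by apply: fmax; exact: leq_subr.
Qed.

Lemma main_tour (V : finType) (E : rel V) (Eirr : irreflexive E) (k : nat) (kpos : 0 < k) :
  ~ has_disjoint_immersions E t k -> ctw t <= 64 * dnorm E ^ 2 * k ^ 2.
Proof.
move=> Nimm.
case: (@arg_maxnP 'I_#|W|.+1 ord0 xpredT (fun j => f t j) isT) => J0 _ hJ.
set J := nat_of_ord J0.
have fmax j : j <= #|W| -> f t j <= f t J.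
  by move=> jn; apply: (hJ (Ordinal (n := #|W|.+1) (m := j) jn)).
apply: leq_trans (ctw_le_M fmax) _.
rewrite leqNgt; apply/negP => big; apply: Nimm.
set M := f t J in big fmax.
set s := #|V|; set A := #|arcset E|; set P := k * A; set D := dnorm E * k.
have sD : s <= D by rewrite /D /dnorm -/s; nia.
have PD : P <= D by rewrite /D /P /dnorm -/A; nia.
have bigD : 64 * D ^ 2 < M by move: big; rewrite /D expnMn mulnA.
have Jn : J < #|W|.
  rewrite ltn_neqAle -ltnS ltn_ord andbT; apply/eqP => eJ.
  by move: bigD; rewrite /M eJ f_n0.
have JS : J + s <= #|W|.
  rewrite leqNgt; apply/negP => h.
  have w := @winR _ _ tirr ttot J Jn fmax (#|W| - J).
  rewrite subnKC ?(ltnW Jn) // f_n0 in w; have {}w := w (leqnn _).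
  have hq : #|W| - J < s by move: h Jn; set n := #|W|; lia.
  have : (#|W| - J) * (#|W| - J + 1) <= D * D by apply: leq_mul; lia.
  move: w bigD; rewrite /M; nia.
have [w0 _] : exists w : W, true by apply/card_gt0P; apply: leq_ltn_trans Jn.
pose vtx j := odflt w0 [pick x | rk t x == j].
have vtxP j : j < #|W| -> rk t (vtx j) = j.
  move=> jn; have [x rx] := rk_onto t jn; rewrite /vtx; case: pickP => [y /eqP //|/(_ x)].
  by rewrite rx eqxx.
pose phi := fun u : V => vtx (J + enum_rank u).
have es u : enum_rank u < s := ltn_ord (enum_rank u).
have rphi u : rk t (phi u) = J + enum_rank u.
  by apply: vtxP; apply: leq_trans JS; rewrite ltn_add2l.
have phi_inj : injective phi.
  move=> u v e; have := rphi u; rewrite e rphi => /eqP; rewrite eqn_add2l => /eqP/val_inj.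
  by move=> h; apply: enum_rank_inj.
have dg_lo u : J <= (dg t (phi u)).+1.
  rewrite -dlE rphi; apply: (dl_lower tirr ttot Jn fmax); first exact: leq_addr.
  by rewrite -rphi rk_lt.
have dg_hi u : dg t (phi u) <= J + 2 * s.
  rewrite -dlE rphi; apply: leq_trans (dl_upper tirr ttot Jn fmax (leq_addr _ _) _) _.
    by rewrite -rphi rk_lt.
  have := es u; rewrite addKn; lia.
pose Ix := ('I_k * (V * V))%type.
pose src := fun i : Ix => phi i.2.1.
pose dst := fun i : Ix => phi i.2.2.
pose Pr := fun i : Ix => i.2 \in arcset E.
pose Lmax := 2 * s + 2 * P + 3.
have Hne i : Pr i -> src i != dst i.
  rewrite /Pr inE => Euv; apply/eqP => /phi_inj e; by move: Euv; rewrite /= e Eirr.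
have Hlen i : Pr i -> dg t (dst i) + P + P - dg t (src i) + 2 <= Lmax.
  move=> _; have := dg_hi i.2.2; have := dg_lo i.2.1; rewrite /Lmax /src /dst; lia.
have Hfeas U i : Pr i -> size U <= Lmax * P ->
    (forall z, ain U z <= P) -> (forall z, aout U z <= P) -> connect (eU t U) (src i) (dst i).
  move=> _ sU hin hout; apply/negPn/negP => nc.
  have [j [jn fj jx yj]] := reach_fail tirr ttot nc.
  have h1 := dg_hi i.2.2; have h2 := dg_lo i.2.1; have h3 := hin (dst i); have h4 := hout (src i).
  have hLP : Lmax * P <= (4 * D + 3) * D by apply: leq_mul => //; rewrite /Lmax; lia.
  case: (leqP J j) => Jj.
  - have w := @winR _ _ tirr ttot J Jn fmax (j - J); rewrite subnKC // in w.
    have {}w := w jn.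
    have hq : j - J <= 3 * D by move: jx h1 h3; rewrite /dst; lia.
    have hX : (j - J) * (j - J + 1) <= (3 * D) * (3 * D + 1) by apply: leq_mul; lia.
    apply: (arith_contra bigD w) hX; apply: leq_trans fj _; apply: leq_trans sU hLP.
  - have w := @winL _ _ tirr ttot J Jn fmax (J - j); rewrite subKn ?(ltnW Jj) // in w.
    have {}w := w (leq_subr _ _).
    have hq : J - j <= D by move: yj h2 h4; rewrite /src; lia.
    have hX : (J - j) * (J - j + 1) <= (3 * D) * (3 * D + 1) by apply: leq_mul; lia.
    apply: (arith_contra bigD w) hX; apply: leq_trans fj _; apply: leq_trans sU hLP.
pose l := enum [set i : Ix | Pr i].
have ul : uniq l := enum_uniq _.
have memL i : (i \in l) = Pr i by rewrite mem_enum inE.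
have allPr : all Pr l by apply/allP => i; rewrite memL.
have szl : size l <= P.
  rewrite -cardE.
  have -> : [set i : Ix | Pr i] = setX [set: 'I_k] (arcset E) by apply/setP => -[i a]; rewrite /Pr !inE.
  by rewrite cardsX cardsT card_ord.
have [Pth [hdp _ hu]] := route tirr ttot Hfeas Hlen Hne ul allPr szl.
pose F := fun i : Ix => path_arcs (src i) (Pth i).
have [Fu Fd] := flat_uniq_pair ul hu.
have immE i : imm_arcs E phi (fun u v => Pth (i, (u, v))) =
    flatten (map F [seq (i, a) | a <- enum (arcset E)]).
  by rewrite /imm_arcs -map_comp; congr flatten; apply: eq_map => -[u v].
have memIA i a : a \in enum (arcset E) -> (i, a) \in l by rewrite mem_enum memL.
exists (fun _ => phi), (fun i u v => Pth (i, (u, v))); split.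
- move=> i; split; first exact: phi_inj.
  split.
    move=> u v Euv; apply: (hdp (i, (u, v))); rewrite memL /Pr inE; exact: Euv.
  rewrite immE; apply: flat_uniq_of.
  + by rewrite map_inj_uniq ?enum_uniq // => a b [].
  + by move=> x /mapP[a aE ->]; apply: Fu; apply: memIA.
  + move=> x y e /mapP[a aE ->] /mapP[b bE ->] neq; apply: Fd => //; exact: memIA.
- move=> i j ij e; rewrite !immE => /flattenP[s1 /mapP[x /mapP[a aE ->] ->] ex].
  apply/negP => /flattenP[s2 /mapP[y /mapP[b bE ->] ->] ey].
  have neq : (i, a) != (j, b) by apply: contraNneq ij; case=> -> _; exact: eqxx.
  by move: (Fd _ _ e (memIA i a aE) (memIA j b bE) neq ex); rewrite ey.
Qed.

End Main.

Theorem corollary8 :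
  exists d : nat,
    forall (V : finType) (E : rel V), simple_digraph E ->
    forall k : nat, 0 < k ->
    forall (W : finType) (t : rel W), is_tournament t ->
      ~ has_disjoint_immersions E t k ->
      ctw t <= d * (dnorm E) ^ 2 * k ^ 2.
Proof.
exists 64 => V E Es k kp W t [tirr ttot] N.
exact: (main_tour tirr ttot Es kp N).
Qed.
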